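(* Let $t\in\mathbb{Q}^\times$ and $E_t:\ v^2=u^3+(t^2+2)u^2+u$. Then $E_t$ is isomorphic over $\mathbb{Q}$ to the elliptic curve $$E:\ y^2+xy+ay=x^3+ax^2,\qquad a=-\frac{1}{4t^2},$$ on which $[4](0,0)=\mathcal{O}$, and $E$ is $4$-isogenous (over $\mathbb{Q}$) to the elliptic curve $$E':\ Y^2+XY+AY=X^3+AX^2,\qquad A=\frac{t^2+4}{64},$$ via an isogeny $\phi:E\to E'$ of degree $4$ with $\phi(0,0)=\mathcal{O}$. *)

(* Defs.v *)
From HB Require Import structures.
From mathcomp Require Import all_boot all_order all_algebra.
Set Implicit Arguments. Unset Strict Implicit. Unset Printing Implicit Defensive.
Import Order.TTheory GRing.Theory Num.Theory.
Local Open Scope ring_scope.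

(* A Weierstrass cubic y^2 + a1 x y + a3 y = x^3 + a2 x^2 + a4 x + a6 over Q. *)
Record wcurve := WCurve { a1 : rat; a2 : rat; a3 : rat; a4 : rat; a6 : rat }.

Definition weq (E : wcurve) (x y : rat) : rat :=
  y ^+ 2 + a1 E * x * y + a3 E * y
  - (x ^+ 3 + a2 E * x ^+ 2 + a4 E * x + a6 E).

(* discriminant (Silverman III.1) *)
Definition disc (E : wcurve) : rat :=
  let b2 := a1 E ^+ 2 + 4 * a2 E in
  let b4 := 2 * a4 E + a1 E * a3 E in
  let b6 := a3 E ^+ 2 + 4 * a6 E in
  let b8 := a1 E ^+ 2 * a6 E + 4 * a2 E * a6 E - a1 E * a3 E * a4 E
            + a2 E * a3 E ^+ 2 - a4 E ^+ 2 in
  - b2 ^+ 2 * b8 - 8 * b4 ^+ 3 - 27 * b6 ^+ 2 + 9 * b2 * b4 * b6.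

Definition is_elliptic (E : wcurve) : Prop := disc E != 0.

Definition Q_isomorphic (E E' : wcurve) : Prop :=
  exists u r s w : rat, u != 0 /\
    forall x y : rat,
      weq E (u ^+ 2 * x + r) (u ^+ 3 * y + s * u ^+ 2 * x + w)
      = u ^+ 6 * weq E' x y.

(* Rational points: None is the point at infinity O. *)
Definition point := option (rat * rat).
Definition O_pt : point := None.

Definition on_curve (E : wcurve) (P : point) : bool :=
  if P is Some (x, y) then weq E x y == 0 else true.

(* chord-and-tangent group law (Silverman, Algorithm III.2.3) *)
Definition add_pt (E : wcurve) (P Q : point) : point :=
  match P, Q with
  | None, _ => Q
  | _, None => P
  | Some (x1, y1), Some (x2, y2) =>
      if (x1 == x2) && (y1 + y2 + a1 E * x2 + a3 E == 0) then None
      else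
        let lam := if x1 != x2 then (y2 - y1) / (x2 - x1)
                   else (3 * x1 ^+ 2 + 2 * a2 E * x1 + a4 E - a1 E * y1)
                        / (2 * y1 + a1 E * x1 + a3 E) in
        let nu := if x1 != x2 then (y1 * x2 - y2 * x1) / (x2 - x1)
                  else (- x1 ^+ 3 + a4 E * x1 + 2 * a6 E - a3 E * y1)
                       / (2 * y1 + a1 E * x1 + a3 E) in
        let x3 := lam ^+ 2 + a1 E * lam - a2 E - x1 - x2 in
        Some (x3, - (lam + a1 E) * x3 - nu - a3 E)
  end.

Fixpoint mul_pt (E : wcurve) (n : nat) (P : point) : point :=
  if n is n'.+1 then add_pt E P (mul_pt E n' P) else O_pt.

(* Bivariate polynomials in Q[x][y]:  {poly {poly rat}}, outer variable y. *)
Definition Xb : {poly {poly rat}} := ('X)%:P.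
Definition Yb : {poly {poly rat}} := 'X.

Definition weq_poly (E : wcurve) : {poly {poly rat}} :=
  Yb ^+ 2 + (a1 E)%:P%:P * Xb * Yb + (a3 E)%:P%:P * Yb
  - (Xb ^+ 3 + (a2 E)%:P%:P * Xb ^+ 2 + (a4 E)%:P%:P * Xb + (a6 E)%:P%:P).

(* A rational map phi : E --> E' defined over Q, given in the normal form
     phi(x, y) = ( N(x)/D(x) , (P(x) + Q(x) y)/R(x) )
   (every isogeny has this form: x'∘phi is invariant under negation, hence
   lies in Q(x), and Q(E) = Q(x) ⊕ Q(x) y).  The condition that phi maps E to
   E' is that the cleared-denominator equation of E' pulled back by phi
   vanishes on E, i.e. is divisible by the Weierstrass polynomial of E. *)
Record ratmap := RatMap { mN : {poly rat}; mD : {poly rat};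
                          mP : {poly rat}; mQ : {poly rat}; mR : {poly rat} }.

Definition pullback_eq (E' : wcurve) (f : ratmap) : {poly {poly rat}} :=
  let N := (mN f)%:P in let D := (mD f)%:P in let R := (mR f)%:P in
  let Yn := (mP f)%:P + (mQ f)%:P * Yb in
  Yn ^+ 2 * D ^+ 3 + (a1 E')%:P%:P * N * Yn * R * D ^+ 2
  + (a3 E')%:P%:P * Yn * R * D ^+ 3
  - (N ^+ 3 * R ^+ 2 + (a2 E')%:P%:P * N ^+ 2 * D * R ^+ 2
     + (a4 E')%:P%:P * N * D ^+ 2 * R ^+ 2 + (a6 E')%:P%:P * D ^+ 3 * R ^+ 2).

Definition maps_into (E E' : wcurve) (f : ratmap) : Prop :=
  [/\ mD f != 0, mR f != 0 &
      exists H : {poly {poly rat}}, pullback_eq E' f = H * weq_poly E].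

(* phi(O) = O  iff  x'∘phi = N(x)/D(x) has a pole at O, i.e. deg N > deg D
   (N, D coprime). *)
Definition fixes_O (f : ratmap) : Prop := (size (mD f) < size (mN f))%N.

(* Degree of phi: [Q(E) : phi^* Q(E')] = [Q(x) : Q(N/D)] since both
   [Q(E):Q(x)] and [Q(E'):Q(x')] equal 2; and [Q(x):Q(N/D)] = max(deg N, deg D)
   for coprime N, D. *)
Definition map_degree (f : ratmap) : nat :=
  (maxn (size (mN f)) (size (mD f))).-1.

(* An isogeny E -> E' over Q of degree n: a non-constant rational map defined
   over Q sending O to O (it is then automatically a morphism and a group
   homomorphism). *)
Definition Q_isogeny (E E' : wcurve) (f : ratmap) (n : nat) : Prop :=
  [/\ coprimep (mN f) (mD f), maps_into E E' f, fixes_O f & map_degree f = n].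

(* phi(x0, y0) = O  iff  x'∘phi has a pole at (x0,y0), i.e. D(x0) = 0. *)
Definition maps_to_O (f : ratmap) (x0 y0 : rat) : Prop := (mD f).[x0] = 0.

Definition Et (t : rat) : wcurve := WCurve 0 (t ^+ 2 + 2) 0 1 0.
Definition E_of (t : rat) : wcurve :=
  let a := - (4 * t ^+ 2)^-1 in WCurve 1 a a 0 0.
Definition E'_of (t : rat) : wcurve :=
  let A := (t ^+ 2 + 4) / 64 in WCurve 1 A A 0 0.

(* Main.v *)
Require Import Defs.
From HB Require Import structures.
From mathcomp Require Import all_boot all_order all_algebra.
From mathcomp Require Import ring lra.
Import Order.TTheory GRing.Theory Num.Theory.
Local Open Scope ring_scope.

(* Explicit 4-isogeny computed via Velu's formulas for the
   kernel <(0,0)>, composed with an isomorphism onto E'. *)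
Definition phiN (t : rat) : {poly rat} :=
  Poly [:: (- (1)); ((2 ^+ 3 * t ^+ 2)); ((2 ^+ 5 * t ^+ 2) + - (2 ^+ 4 * t ^+ 4)); (- (2 ^+ 7 * t ^+ 4)); ((2 ^+ 6 * t ^+ 6))].
Definition phiD (t : rat) : {poly rat} :=
  Poly [:: 0; 0; (- (2 ^+ 8 * t ^+ 2)); ((2 ^+ 10 * t ^+ 4))].
Definition phiP (t : rat) : {poly rat} :=
  Poly [:: ((1)); (- (2 ^+ 3 * t) + - (7 * 2 ^+ 1 * t ^+ 2)); ((3 * 2 ^+ 5 * t ^+ 3) + (9 * 2 ^+ 3 * t ^+ 4)); ((2 ^+ 7 * t ^+ 3) + - (13 * 2 ^+ 5 * t ^+ 5) + - (5 * 2 ^+ 5 * t ^+ 6)); (- (2 ^+ 10 * t ^+ 5) + (2 ^+ 6 * t ^+ 6) + (3 * 2 ^+ 8 * t ^+ 7) + (2 ^+ 7 * t ^+ 8)); ((5 * 2 ^+ 9 * t ^+ 7) + - (3 * 2 ^+ 7 * t ^+ 8) + - (2 ^+ 9 * t ^+ 9)); (- (2 ^+ 11 * t ^+ 9) + (2 ^+ 9 * t ^+ 10))].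
Definition phiQ (t : rat) : {poly rat} :=
  Poly [:: (- (2 ^+ 3 * t ^+ 2)); ((5 * 2 ^+ 4 * t ^+ 4)); (- (2 ^+ 8 * t ^+ 6)); ((2 ^+ 8 * t ^+ 8)); (- (2 ^+ 9 * t ^+ 8)); ((2 ^+ 10 * t ^+ 10))].
Definition phiR (t : rat) : {poly rat} :=
  Poly [:: 0; 0; 0; ((2 ^+ 12 * t ^+ 3)); (- (2 ^+ 15 * t ^+ 5)); ((2 ^+ 16 * t ^+ 7))].

Definition gN {R : comNzRingType} (x t : R) : R :=
  ((((((2 ^+ 6 * t ^+ 6)) * x + (- (2 ^+ 7 * t ^+ 4))) * x + ((2 ^+ 5 * t ^+ 2) + - (2 ^+ 4 * t ^+ 4))) * x + ((2 ^+ 3 * t ^+ 2))) * x + (- (1))).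
Definition gD {R : comNzRingType} (x t : R) : R :=
  (((((2 ^+ 10 * t ^+ 4)) * x + (- (2 ^+ 8 * t ^+ 2))) * x + 0) * x + 0).
Definition gP {R : comNzRingType} (x t : R) : R :=
  (((((((- (2 ^+ 11 * t ^+ 9) + (2 ^+ 9 * t ^+ 10)) * x + ((5 * 2 ^+ 9 * t ^+ 7) + - (3 * 2 ^+ 7 * t ^+ 8) + - (2 ^+ 9 * t ^+ 9))) * x + (- (2 ^+ 10 * t ^+ 5) + (2 ^+ 6 * t ^+ 6) + (3 * 2 ^+ 8 * t ^+ 7) + (2 ^+ 7 * t ^+ 8))) * x + ((2 ^+ 7 * t ^+ 3) + - (13 * 2 ^+ 5 * t ^+ 5) + - (5 * 2 ^+ 5 * t ^+ 6))) * x + ((3 * 2 ^+ 5 * t ^+ 3) + (9 * 2 ^+ 3 * t ^+ 4))) * x + (- (2 ^+ 3 * t) + - (7 * 2 ^+ 1 * t ^+ 2))) * x + ((1))).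
Definition gQ {R : comNzRingType} (x t : R) : R :=
  (((((((2 ^+ 10 * t ^+ 10)) * x + (- (2 ^+ 9 * t ^+ 8))) * x + ((2 ^+ 8 * t ^+ 8))) * x + (- (2 ^+ 8 * t ^+ 6))) * x + ((5 * 2 ^+ 4 * t ^+ 4))) * x + (- (2 ^+ 3 * t ^+ 2))).
Definition gR {R : comNzRingType} (x t : R) : R :=
  (((((((2 ^+ 16 * t ^+ 7)) * x + (- (2 ^+ 15 * t ^+ 5))) * x + ((2 ^+ 12 * t ^+ 3))) * x + 0) * x + 0) * x + 0).
Definition gG {R : comNzRingType} (x t : R) : R :=
  (((((((((((((((((((((2 ^+ 54 * t ^+ 30)) * x + (- (7 * 2 ^+ 52 * t ^+ 28))) * x + ((19 * 2 ^+ 50 * t ^+ 26) + (2 ^+ 53 * t ^+ 28))) * x + (- (25 * 2 ^+ 48 * t ^+ 24) + - (9 * 2 ^+ 51 * t ^+ 26))) * x + ((2 ^+ 50 * t ^+ 22) + (17 * 2 ^+ 50 * t ^+ 24) + (2 ^+ 50 * t ^+ 26))) * x + (- (2 ^+ 46 * t ^+ 20) + - (35 * 2 ^+ 48 * t ^+ 22) + - (11 * 2 ^+ 48 * t ^+ 24))) * x + ((85 * 2 ^+ 45 * t ^+ 20) + (53 * 2 ^+ 46 * t ^+ 22))) * x + (- (61 * 2 ^+ 43 * t ^+ 18) + - (147 * 2 ^+ 44 * t ^+ 20))) * x + ((3 * 2 ^+ 44 * t ^+ 16) + (259 * 2 ^+ 42 * t ^+ 18))) * x + (- (2 ^+ 41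 * t ^+ 14) + - (301 * 2 ^+ 40 * t ^+ 16))) * x + ((231 * 2 ^+ 38 * t ^+ 14))) * x + (- (113 * 2 ^+ 36 * t ^+ 12))) * x + ((2 ^+ 39 * t ^+ 10))) * x + (- (2 ^+ 34 * t ^+ 8))) * x + 0) * x + 0) * x + 0) * x + 0) * x + 0) * x + 0).

Lemma ell3 (t : rat) : t != 0 ->
  is_elliptic (Et t) /\ is_elliptic (E_of t) /\ is_elliptic (E'_of t).
Proof.
move=> ht.
have h4 : t ^+ 2 + 4 != 0.
  by apply: lt0r_neq0; have := sqr_ge0 t; lra.
rewrite /is_elliptic; split; [|split].
- have -> : disc (Et t) = 16 * t ^+ 2 * (t ^+ 2 + 4) by rewrite /disc /=; ring.
  by rewrite !(mulf_neq0, invr_neq0, oppr_eq0, expf_neq0).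
- have -> : disc (E_of t) = (t ^+ 2 + 4) / (256 * t ^+ 10).
    by rewrite /disc /=; field.
  by rewrite mulf_neq0 // invr_neq0 // mulf_neq0 // expf_neq0.
- rewrite /E'_of; set A := (t ^+ 2 + 4) / 64.
  have -> : disc (WCurve 1 A A 0 0) = A ^+ 4 * (1 - 16 * A) by rewrite /disc /=; ring.
  have -> : 1 - 16 * A = - (t ^+ 2 / 4) by rewrite /A; field.
  have hA : A != 0 by rewrite /A mulf_neq0 // invr_neq0.
  by rewrite mulf_neq0 ?expf_neq0 // oppr_eq0 mulf_neq0 ?expf_neq0 // invr_neq0.
Qed.
Lemma iso (t : rat) : t != 0 -> Q_isomorphic (Et t) (E_of t).
Proof.
move=> ht; exists (2 * t), (-1), t, (- t); split; first by rewrite mulf_neq0.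
move=> x y; rewrite /weq /=.
field; exact: ht.
Qed.

Lemma tors4 (a : rat) : a != 0 ->
  on_curve (WCurve 1 a a 0 0) (Some (0,0)) /\
  mul_pt (WCurve 1 a a 0 0) 4 (Some (0,0)) = O_pt.
Proof.
move=> ha; split.
  rewrite /on_curve /weq /=; apply/eqP; ring.
set E := WCurve 1 a a 0 0.
have h1 : add_pt E (Some (0,0)) (Some (0,0)) = Some (-a, 0).
  rewrite /add_pt /= ifF; last by apply/negbTE; rewrite (_ : 0 + 0 + 1 * 0 + a = a) //; ring.
  congr (Some (_, _)); field; done.
have h2 : add_pt E (Some (0,0)) (Some (-a,0)) = Some (0, -a).
  have nz : (0 == -a) = false by rewrite eq_sym oppr_eq0; apply/negbTE.
  rewrite /add_pt /= nz /=.
  congr (Some (_, _)); field; rewrite ?oppr_eq0 //.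
have h3 : add_pt E (Some (0,0)) (Some (0,-a)) = None.
  by rewrite /add_pt /= (_ : 0 - a + 1 * 0 + a = 0) ?eqxx //; ring.
change (add_pt E (Some (0,0)) (add_pt E (Some (0,0)) (add_pt E (Some (0,0)) (add_pt E (Some (0,0)) None))) = None).
by rewrite (_ : add_pt E (Some (0,0)) None = Some (0,0)) // h1 h2 h3.
Qed.


Notation PP := {poly {poly rat}}.
Definition phi (t : rat) : ratmap := RatMap (phiN t) (phiD t) (phiP t) (phiQ t) (phiR t).

Lemma transN (t : rat) : (phiN t)%:P = gN Xb (t%:P%:P).
Proof. rewrite /phiN /gN /Xb /= !cons_poly_def. ring. Qed.
Lemma transD (t : rat) : (phiD t)%:P = gD Xb (t%:P%:P).
Proof. rewrite /phiD /gD /Xb /= !cons_poly_def. ring. Qed.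
Lemma transP (t : rat) : (phiP t)%:P = gP Xb (t%:P%:P).
Proof. rewrite /phiP /gP /Xb /= !cons_poly_def. ring. Qed.
Lemma transQ (t : rat) : (phiQ t)%:P = gQ Xb (t%:P%:P).
Proof. rewrite /phiQ /gQ /Xb /= !cons_poly_def. ring. Qed.
Lemma transR (t : rat) : (phiR t)%:P = gR Xb (t%:P%:P).
Proof. rewrite /phiR /gR /Xb /= !cons_poly_def. ring. Qed.

Lemma gcore {R : comNzRingType} (x y t : R) :
  64 * ((gP x t + gQ x t * y) ^+ 2 * gD x t ^+ 3
        + gN x t * (gP x t + gQ x t * y) * gR x t * gD x t ^+ 2
        - gN x t ^+ 3 * gR x t ^+ 2)
  + (t ^+ 2 + 4) * ((gP x t + gQ x t * y) * gR x t * gD x t ^+ 3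
                    - gN x t ^+ 2 * gD x t * gR x t ^+ 2)
  = gG x t * (4 * t ^+ 2 * (y ^+ 2 + x * y - x ^+ 3) - (y - x ^+ 2)).
Proof. rewrite /gN /gD /gP /gQ /gR /gG. ring. Qed.

Lemma pull_eq (t : rat) :
  (64 : rat)%:P%:P * pullback_eq (E'_of t) (phi t) =
  64 * (((phiP t)%:P + (phiQ t)%:P * Yb) ^+ 2 * (phiD t)%:P ^+ 3
        + (phiN t)%:P * ((phiP t)%:P + (phiQ t)%:P * Yb) * (phiR t)%:P * (phiD t)%:P ^+ 2
        - (phiN t)%:P ^+ 3 * (phiR t)%:P ^+ 2)
  + ((t%:P%:P : PP) ^+ 2 + 4) * (((phiP t)%:P + (phiQ t)%:P * Yb) * (phiR t)%:P * (phiD t)%:P ^+ 3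
                    - (phiN t)%:P ^+ 2 * (phiD t)%:P * (phiR t)%:P ^+ 2).
Proof.
rewrite /pullback_eq; cbn [mN mD mP mQ mR a1 a2 a3 a4 a6 phi E'_of].
set A := (t ^+ 2 + 4) / 64.
have hA : (t%:P%:P : PP) ^+ 2 + 4 = (64 : rat)%:P%:P * A%:P%:P.
  rewrite -!polyCM /A mulrC divfK //.
  ring.
rewrite hA. ring.
Qed.


Lemma assemble (N D P Q R T : PP) :
  N = gN Xb T -> D = gD Xb T -> P = gP Xb T -> Q = gQ Xb T -> R = gR Xb T ->
  64 * ((P + Q * Yb) ^+ 2 * D ^+ 3 + N * (P + Q * Yb) * R * D ^+ 2 - N ^+ 3 * R ^+ 2)
  + (T ^+ 2 + 4) * ((P + Q * Yb) * R * D ^+ 3 - N ^+ 2 * D * R ^+ 2)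
  = gG Xb T * (4 * T ^+ 2 * (Yb ^+ 2 + Xb * Yb - Xb ^+ 3) - (Yb - Xb ^+ 2)).
Proof. by move=> -> -> -> -> ->; apply: gcore. Qed.

Lemma pull_eq2 (t : rat) :
  (64 : rat)%:P%:P * pullback_eq (E'_of t) (phi t) =
  gG Xb (t%:P%:P) * (4 * (t%:P%:P : PP) ^+ 2 * (Yb ^+ 2 + Xb * Yb - Xb ^+ 3) - (Yb - Xb ^+ 2)).
Proof.
rewrite pull_eq; apply: assemble; [exact: transN|exact: transD|exact: transP|exact: transQ|exact: transR].
Qed.

Lemma W_eq (t : rat) : t != 0 ->
  (4 * t ^+ 2)%:P%:P * weq_poly (E_of t) =
  4 * (t%:P%:P : PP) ^+ 2 * (Yb ^+ 2 + Xb * Yb - Xb ^+ 3) - (Yb - Xb ^+ 2).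
Proof.
move=> ht; rewrite /weq_poly; cbn [a1 a2 a3 a4 a6 E_of].
set a := - (4 * t ^+ 2)^-1.
have ha : (4 * t ^+ 2)%:P%:P * a%:P%:P = -1 :> PP.
  by rewrite -!polyCM /a mulrN mulfV ?mulf_neq0 ?expf_neq0 // !rmorphN !rmorph1.
apply/eqP; rewrite -subr_eq0; apply/eqP.
transitivity (((4 * t ^+ 2)%:P%:P * a%:P%:P + 1) * (Yb - Xb ^+ 2) : PP); first ring.
by rewrite ha addNr mul0r.
Qed.

Lemma sizeN (t : rat) : t != 0 -> size (phiN t) = 5%N.
Proof. move=> ht; rewrite /phiN (PolyK (c := 0)) //; cbn [last]; rewrite mulf_neq0 ?expf_neq0 //. Qed.
Lemma sizeD (t : rat) : t != 0 -> size (phiD t) = 4%N.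
Proof. move=> ht; rewrite /phiD (PolyK (c := 0)) //; cbn [last]; rewrite mulf_neq0 ?expf_neq0 //. Qed.
Lemma sizeR (t : rat) : t != 0 -> size (phiR t) = 6%N.
Proof. move=> ht; rewrite /phiR (PolyK (c := 0)) //; cbn [last]; rewrite mulf_neq0 ?expf_neq0 //. Qed.

Lemma copr (t : rat) : t != 0 -> coprimep (phiN t) (phiD t).
Proof.
move=> ht.
set b := (4 * t ^+ 2)^-1.
have hb : b != 0 by rewrite /b invr_neq0 // mulf_neq0 ?expf_neq0.
have hc : (2 ^+ 10 * t ^+ 4 : rat) != 0 by rewrite mulf_neq0 ?expf_neq0.
have hD : phiD t = 'X * ('X * ((2 ^+ 10 * t ^+ 4) *: ('X - b%:P))).
  rewrite /phiD /= !cons_poly_def -mul_polyC mulrBr -polyCM.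
  have -> : 2 ^+ 10 * t ^+ 4 * b = 2 ^+ 8 * t ^+ 2 by rewrite /b; field.
  ring.
rewrite hD coprimepMr coprimepX coprimepMr coprimepX coprimepZr // coprimep_XsubC /root.
have -> : (phiN t).[0] = -1 by rewrite horner_Poly /=; ring.
have -> : (phiN t).[b] = b by rewrite horner_Poly /= /b; field.
by rewrite oppr_eq0 oner_eq0 hb.
Qed.

Lemma phiD0 (t : rat) : (phiD t).[0] = 0.
Proof. by rewrite /phiD horner_Poly /=; ring. Qed.

Opaque phiN phiD phiP phiQ phiR.

Lemma isog (t : rat) : t != 0 ->
  Q_isogeny (E_of t) (E'_of t) (phi t) 4 /\ maps_to_O (phi t) 0 0.
Proof.
move=> ht; split; last first.
  by rewrite /maps_to_O; cbn [mD phi]; exact: phiD0.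
split.
- by cbn [mN mD phi]; exact: copr.
- split.
  + by cbn [mD phi]; rewrite -size_poly_eq0 sizeD.
  + by cbn [mR phi]; rewrite -size_poly_eq0 sizeR.
  + exists (((4 * t ^+ 2) / 64)%:P%:P * gG Xb (t%:P%:P)).
    have c64 : (64 : rat)%:P%:P != 0 :> PP by rewrite !polyC_eq0.
    apply: (mulfI c64).
    rewrite pull_eq2 -W_eq //.
    have e : (64 : rat)%:P%:P * ((4 * t ^+ 2) / 64)%:P%:P = (4 * t ^+ 2)%:P%:P :> PP.
      by rewrite -!polyCM mulrC divfK.
    transitivity (((64 : rat)%:P%:P * ((4 * t ^+ 2) / 64)%:P%:P) * gG Xb (t%:P%:P)
                  * weq_poly (E_of t) : PP); last ring.
    rewrite e; ring.
- by rewrite /fixes_O; cbn [mN mD phi]; rewrite sizeN // sizeD.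
- by rewrite /map_degree; cbn [mN mD phi]; rewrite sizeN // sizeD.
Qed.

Theorem proposition2p1 (t : rat) (ht : t != 0) :
  (is_elliptic (Et t) /\ is_elliptic (E_of t) /\ is_elliptic (E'_of t)) /\
  Q_isomorphic (Et t) (E_of t) /\
  (on_curve (E_of t) (Some (0, 0)) /\ mul_pt (E_of t) 4 (Some (0, 0)) = O_pt) /\
  (exists phi : ratmap,
      Q_isogeny (E_of t) (E'_of t) phi 4 /\ maps_to_O phi 0 0).
Proof.
split; first exact: ell3.
split; first exact: iso.
split.
  apply: tors4; rewrite oppr_eq0 invr_neq0 // mulf_neq0 ?expf_neq0 //.
by exists (phi t); apply: isog.
Qed.
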